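(* Let $\mathcal E=\mathbb R^{d_\eta}$, $\mathcal B=\mathbb R^{d_b}$, $\mathcal I=\mathbb R^{d_\mu}$ and let $\Pi\in\mathbb R^{d\times d}$, $d=d_\eta+d_b+d_\mu$, be a symmetric positive-definite matrix, written in block form with respect to the partition $x=(\eta,b,\mu)\in\mathcal E\times\mathcal B\times\mathcal I$ as $$\Pi=\begin{bmatrix}\Pi_{\eta}&\Pi_{\eta b}&\Pi_{\eta\mu}\\ \Pi_{b\eta}&\Pi_b&\Pi_{b\mu}\\ \Pi_{\mu\eta}&\Pi_{\mu b}&\Pi_\mu\end{bmatrix},$$ and assume the Markov blanket condition $\Pi_{\eta\mu}=\Pi_{\mu\eta}^\top=0$. Let $\Sigma:=\Pi^{-1}$ with corresponding blocks $\Sigma_{\eta b},\Sigma_b,\Sigma_{\mu b}$, and define the linear maps $\boldsymbol\eta:\mathcal B\to\mathcal E$, $\boldsymbol\eta(b)=\Sigma_{\eta b}\Sigma_b^{-1}b$ and $\boldsymbol\mu:\mathcal B\to\mathcal I$, $\boldsymbol\mu(b)=\Sigma_{\mu b}\Sigma_b^{-1}b$. Then the following are equivalent: (i) there exists a function $\sigma:\operatorname{Im}\boldsymbol\mu\to\operatorname{Im}\boldsymbol\eta$ such that $\sigma(\boldsymbol\mu(b))=\boldsymbol\eta(b)$ for every $b\in\mathcal B$; (ii) for all $b_1,b_2\in\mathcal B$, $\boldsymbol\mu(b_1)=\boldsymbol\mu(b_2)$ implies $\boldsymbol\eta(b_1)=\boldsymbol\eta(b_2)$; (iii) $\ker\Sigma_{\mu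 b}\subset\ker\Sigma_{\eta b}$; (iv) $\ker\Pi_{\mu b}\subset\ker\Pi_{\eta b}$.
   Context: Here $\Pi$ is the precision matrix of a Gaussian density $p(x)=\mathcal N(x;0,\Pi^{-1})$ on $\mathbb R^d$; the condition $\Pi_{\eta\mu}=0$ is equivalent to conditional independence of $\eta$ and $\mu$ given $b$, and $\boldsymbol\eta(b)=\mathbb E[\eta\mid b]$, $\boldsymbol\mu(b)=\mathbb E[\mu\mid b]$ are the conditional expectations under $p$. Blocks $\Sigma_{\eta b},\Sigma_{\mu b},\Sigma_b$ denote the corresponding submatrices of $\Sigma=\Pi^{-1}$ (not the inverses of blocks of $\Pi$); $\Sigma_b$ is invertible as a principal submatrix of a positive-definite matrix. $\ker$ and $\operatorname{Im}$ denote kernel and image. *)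

(* Defs.v *)
From HB Require Import structures.
From mathcomp Require Import all_boot all_order all_algebra.
Set Implicit Arguments. Unset Strict Implicit. Unset Printing Implicit Defensive.
Import Order.TTheory GRing.Theory Num.Theory.
Local Open Scope ring_scope.

(* Coordinates x = (eta, b, mu) in R^(de + db + dmu), with
   d = (de + db) + dmu. Index embeddings of the three blocks. *)
Definition eta_idx (de db dmu : nat) (i : 'I_de) : 'I_(de + db + dmu) :=
  lshift dmu (lshift db i).
Definition b_idx (de db dmu : nat) (j : 'I_db) : 'I_(de + db + dmu) :=
  lshift dmu (rshift de j).
Definition mu_idx (de db dmu : nat) (k : 'I_dmu) : 'I_(de + db + dmu) :=
  rshift (de + db) k.

Definition sym_posdef (R : realFieldType) (n : nat) (A : 'M[R]_n) : Prop :=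
  A^T = A /\ forall x : 'cV[R]_n, x != 0 -> 0 < (x^T *m A *m x) ord0 ord0.

(* Main.v *)
Require Import Defs.
From HB Require Import structures.
From mathcomp Require Import all_boot all_order all_algebra.
From mathcomp Require Import zify.
From Stdlib Require Import ProofIrrelevance ClassicalEpsilon.
Import Order.TTheory GRing.Theory Num.Theory.
Local Open Scope ring_scope.

Lemma pd_ker (R : realFieldType) n (A : 'M[R]_n) :
  (forall x : 'cV_n, x != 0 -> 0 < (x^T *m A *m x) ord0 ord0) ->
  forall v : 'cV_n, A *m v = 0 -> v = 0.
Proof.
move=> PD v Av; apply/eqP; apply/negPn/negP => /PD.
by rewrite -mulmxA Av mulmx0 mxE ltxx.
Qed.

Lemma ker_unit (R : fieldType) n (A : 'M[R]_n) :
  (forall v : 'cV_n, A *m v = 0 -> v = 0) -> A \in unitmx.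
Proof.
move=> K; rewrite -unitmx_tr -row_free_unit -kermx_eq0; apply/eqP/row_matrixP => i.
rewrite row0; set u := row i (kermx A^T).
have h : u *m A^T = 0 by rewrite /u -row_mul mulmx_ker row0.
have : A *m u^T = 0 by rewrite -[A]trmxK -trmx_mul h trmx0.
by move/K => /(congr1 trmx); rewrite trmxK trmx0.
Qed.

Lemma pd_sub (R : realFieldType) n m (A : 'M[R]_n) (f : 'I_m -> 'I_n) :
  injective f ->
  (forall x : 'cV_n, x != 0 -> 0 < (x^T *m A *m x) ord0 ord0) ->
  forall y : 'cV_m, y != 0 -> 0 < (y^T *m mxsub f f A *m y) ord0 ord0.
Proof.
move=> fi PD y y0; set E := rowsub f (1%:M : 'M[R]_n).
have hE : forall B : 'M[R]_n, mxsub f f B = E *m B *m E^T.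
  move=> B; rewrite -[B in LHS]mulmx1 mxsub_mul rowsubE.
  by rewrite /E trmx_mxsub trmx1.
have EE : E *m E^T = 1%:M.
  have := hE 1%:M; rewrite mulmx1 => <-; apply/matrixP => i j; rewrite !mxE (inj_eq fi).
  done.
rewrite hE.
have -> : y^T *m (E *m A *m E^T) *m y = (E^T *m y)^T *m A *m (E^T *m y).
  by rewrite trmx_mul trmxK !mulmxA.
apply: PD; apply: contra y0 => /eqP h.
by rewrite -(mul1mx y) -EE -mulmxA h mulmx0.
Qed.

Lemma K0 (R : fieldType) n p (A : 'M[R]_n) (x : 'M[R]_(n, p)) :
  A \in unitmx -> A *m x = 0 -> x = 0.
Proof. by move=> Au /(congr1 (mulmx (invmx A))); rewrite mulKmx // mulmx0. Qed.

Section S.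
Variables (R : realFieldType) (de db dmu : nat).
Local Notation N := (de + db + dmu).
Local Notation e := (@eta_idx de db dmu).
Local Notation b := (@b_idx de db dmu).
Local Notation mu := (@mu_idx de db dmu).

Lemma mul3 m p (f : 'I_m -> 'I_N) (h : 'I_p -> 'I_N) (A B : 'M[R]_N) :
  mxsub f h (A *m B) = mxsub f e A *m mxsub e h B + mxsub f b A *m mxsub b h B
    + mxsub f mu A *m mxsub mu h B.
Proof.
apply/matrixP=> i j; rewrite !mxE big_split_ord big_split_ord /=.
by congr (_ + _ + _); apply: eq_bigr => k _; rewrite !mxE.
Qed.

Lemma e_inj : injective e. Proof. by move=> i j /lshift_inj/lshift_inj. Qed.
Lemma b_inj : injective b. Proof. by move=> i j /lshift_inj/rshift_inj. Qed.
Lemma mu_inj : injective mu. Proof. by move=> i j /rshift_inj. Qed.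

Lemma eb1 : mxsub e b (1%:M : 'M[R]_N) = 0.
Proof.
apply/matrixP=> i j; rewrite !mxE; case: eqP => // /(congr1 val) /=.
by have := ltn_ord i; lia.
Qed.

Lemma mb1 : mxsub mu b (1%:M : 'M[R]_N) = 0.
Proof.
apply/matrixP=> i j; rewrite !mxE; case: eqP => // /(congr1 val) /=.
by have := ltn_ord j; lia.
Qed.
End S.

Theorem lemma2p1 (R : realFieldType) (de db dmu : nat)
  (Pi : 'M[R]_(de + db + dmu)) :
  sym_posdef Pi ->
  (* Markov blanket condition: Pi_{eta mu} = Pi_{mu eta}^T = 0 *)
  mxsub (@eta_idx de db dmu) (@mu_idx de db dmu) Pi = 0 ->
  mxsub (@mu_idx de db dmu) (@eta_idx de db dmu) Pi = 0 ->
  let Sigma := invmx Pi in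
  let Sigma_eb := mxsub (@eta_idx de db dmu) (@b_idx de db dmu) Sigma in
  let Sigma_b := mxsub (@b_idx de db dmu) (@b_idx de db dmu) Sigma in
  let Sigma_mb := mxsub (@mu_idx de db dmu) (@b_idx de db dmu) Sigma in
  let Pi_eb := mxsub (@eta_idx de db dmu) (@b_idx de db dmu) Pi in
  let Pi_mb := mxsub (@mu_idx de db dmu) (@b_idx de db dmu) Pi in
  let etaf := fun b : 'cV[R]_db => Sigma_eb *m invmx Sigma_b *m b in
  let muf := fun b : 'cV[R]_db => Sigma_mb *m invmx Sigma_b *m b in
  [<->
   (* (i) *)
   exists sigma : {x : 'cV[R]_dmu | exists b, x = muf b} ->
                  {y : 'cV[R]_de | exists b, y = etaf b},
     forall b : 'cV[R]_db,
       proj1_sig (sigma (exist _ (muf b) (ex_intro _ b erefl))) = etaf b;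
   (* (ii) *)
   forall b1 b2 : 'cV[R]_db, muf b1 = muf b2 -> etaf b1 = etaf b2;
   (* (iii) ker Sigma_{mu b} ⊂ ker Sigma_{eta b} *)
   forall v : 'cV[R]_db, Sigma_mb *m v = 0 -> Sigma_eb *m v = 0;
   (* (iv) ker Pi_{mu b} ⊂ ker Pi_{eta b} *)
   forall v : 'cV[R]_db, Pi_mb *m v = 0 -> Pi_eb *m v = 0].
Proof.
move=> [PiT PD] Hem Hme Sigma Seb Sb Smb Peb Pmb etaf muf.
have Pu : Pi \in unitmx by apply: ker_unit; apply: pd_ker.
have SigT : Sigma^T = Sigma by rewrite trmx_inv PiT.
have SPD : forall x : 'cV_ _, x != 0 -> 0 < (x^T *m Sigma *m x) ord0 ord0.
  move=> x x0.
  have -> : x^T *m Sigma *m x = (Sigma *m x)^T *m Pi *m (Sigma *m x).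
    rewrite trmx_mul SigT -!mulmxA; congr (_ *m _).
    by rewrite !mulmxA /Sigma mulVmx // mul1mx.
  apply: PD; apply: contra x0 => /eqP h.
  by rewrite -(mul1mx x) -(mulmxV Pu) -mulmxA h mulmx0.
have Sbu : Sb \in unitmx by apply: ker_unit; apply: pd_ker; apply: pd_sub SPD; apply: b_inj.
have Peu : mxsub (@eta_idx de db dmu) (@eta_idx de db dmu) Pi \in unitmx.
  by apply: ker_unit; apply: pd_ker; apply: pd_sub PD; apply: e_inj.
have Pmu : mxsub (@mu_idx de db dmu) (@mu_idx de db dmu) Pi \in unitmx.
  by apply: ker_unit; apply: pd_ker; apply: pd_sub PD; apply: mu_inj.
have E1 := congr1 (mxsub (@eta_idx de db dmu) (@b_idx de db dmu)) (mulmxV Pu).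
rewrite mul3 eb1 Hem mul0mx addr0 in E1.
have E2 := congr1 (mxsub (@mu_idx de db dmu) (@b_idx de db dmu)) (mulmxV Pu).
rewrite mul3 mb1 Hme mul0mx add0r in E2.
rewrite -/Sigma -/Seb -/Sb -/Peb in E1; rewrite -/Sigma -/Smb -/Sb -/Pmb in E2.
set Pee := mxsub _ _ Pi in E1 Peu; set Pmm := mxsub _ _ Pi in E2 Pmu.
have E1' : Pee *m Seb = - (Peb *m Sb) by apply/eqP; rewrite -addr_eq0 E1.
have E2' : Pmm *m Smb = - (Pmb *m Sb) by apply/eqP; rewrite -addr_eq0 addrC E2.
have h34 : (forall v : 'cV[R]_db, Smb *m v = 0 -> Seb *m v = 0) ->
           forall v : 'cV[R]_db, Pmb *m v = 0 -> Peb *m v = 0.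
  move=> H v Pv; set u := invmx Sb *m v.
  have Sbu' : Sb *m u = v by rewrite /u mulKVmx.
  have : Smb *m u = 0.
    apply: (@K0 _ _ _ Pmm) => //; rewrite mulmxA E2' mulNmx -mulmxA Sbu' Pv oppr0 //.
  move/H => H'.
  by rewrite -Sbu' mulmxA -[Peb *m Sb]opprK -E1' mulNmx -mulmxA H' mulmx0 oppr0.
have h43 : (forall v : 'cV[R]_db, Pmb *m v = 0 -> Peb *m v = 0) ->
           forall v : 'cV[R]_db, Smb *m v = 0 -> Seb *m v = 0.
  move=> H v Sv.
  have : Pmb *m (Sb *m v) = 0.
    by rewrite mulmxA -[Pmb *m Sb]opprK -E2' mulNmx -mulmxA Sv mulmx0 oppr0.
  move/H => h; apply: (@K0 _ _ _ Pee) => //.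
  by rewrite mulmxA E1' mulNmx -mulmxA h oppr0.
have h23 : (forall b1 b2 : 'cV[R]_db, muf b1 = muf b2 -> etaf b1 = etaf b2) ->
           forall v : 'cV[R]_db, Smb *m v = 0 -> Seb *m v = 0.
  move=> H v Sv.
  have := H (Sb *m v) 0; rewrite /muf /etaf /= !mulmx0 !mulmxA !mulmxKV //.
  by apply.
have h32 : (forall v : 'cV[R]_db, Smb *m v = 0 -> Seb *m v = 0) ->
           forall b1 b2 : 'cV[R]_db, muf b1 = muf b2 -> etaf b1 = etaf b2.
  move=> H b1 b2; rewrite /muf /etaf /= => Hm.
  apply/eqP; rewrite -subr_eq0 -mulmxBr -mulmxA H //.
  by rewrite mulmxA mulmxBr Hm subrr.
have h21 : (forall b1 b2 : 'cV[R]_db, muf b1 = muf b2 -> etaf b1 = etaf b2) ->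
   exists sigma : {x : 'cV[R]_dmu | exists b, x = muf b} ->
                  {y : 'cV[R]_de | exists b, y = etaf b},
     forall b : 'cV[R]_db,
       proj1_sig (sigma (exist _ (muf b) (ex_intro _ b erefl))) = etaf b.
  move=> H.
  exists (fun x => let bb := proj1_sig (constructive_indefinite_description _ (proj2_sig x)) in
     exist _ (etaf bb) (ex_intro _ bb erefl)) => bb /=.
  case: constructive_indefinite_description => b' /= hb'.
  by apply: H; rewrite hb'.
have h12 : (exists sigma : {x : 'cV[R]_dmu | exists b, x = muf b} ->
                  {y : 'cV[R]_de | exists b, y = etaf b},
     forall b : 'cV[R]_db,
       proj1_sig (sigma (exist _ (muf b) (ex_intro _ b erefl))) = etaf b) ->
     forall b1 b2 : 'cV[R]_db, muf b1 = muf b2 -> etaf b1 = etaf b2.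
  move=> [sigma Hs] b1 b2 Hm; rewrite -!Hs; congr (sval (sigma _)).
  by apply: eq_sig_hprop => //= x p q; apply: proof_irrelevance.
tfae.
- exact: h12.
- exact: h23.
- exact: h34.
- by move=> H; apply: h21; apply: h32; apply: h43.
Qed.
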